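(* Let $\Gamma$ be a non-amenable group with property RD$_p$ for some $p\in[1,2]$. Then $\mathrm{Lit}(\Gamma)\ge p$.
   Context: For $1\le p<\infty$, $\Gamma$ has property RD$_p$ if there exist a length function $L$ on $\Gamma$ (i.e. $L\colon\Gamma\to[0,\infty)$ with $L(e)=0$, $L(g^{-1})=L(g)$, $L(gh)\le L(g)+L(h)$) and a polynomial $P$ such that $\|a\|_{p\to p}\le P(d)\|a\|_p$ for every $a\in\mathbf{C}[\Gamma]$ supported in the $L$-ball of radius $d\ge0$, where $\|a\|_{p\to p}$ is the operator norm of left convolution by $a$ on $\ell^p(\Gamma)$. $T_1(\Gamma)$ is the space of all $f\colon\Gamma\to\mathbf{C}$ for which there exist $f_1,f_2\colon\Gamma\times\Gamma\to\mathbf{C}$ with $f(x^{-1}y)=f_1(x,y)+f_2(x,y)$ for all $x,y$, $\sup_x\sum_y|f_1(x,y)|<\infty$, $\sup_y\sum_x|f_2(x,y)|<\infty$; $\mathrm{Lit}(\Gamma)=\inf\{q>0:T_1(\Gamma)\subseteq\ell^q(\Gamma)\}$. *)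

(* Defs.v *)
From HB Require Import structures.
From mathcomp Require Import all_boot all_order all_algebra.
From mathcomp Require Import all_classical all_reals all_analysis.
From mathcomp.real_closed Require Import complex.

Set Implicit Arguments.
Unset Strict Implicit.
Unset Printing Implicit Defensive.
Import Order.TTheory GRing.Theory Num.Theory.
Local Open Scope classical_set_scope.
Local Open Scope ring_scope.

Section Defs.
Variable R : realType.
Local Notation C := (R[i]).

Definition cabs (z : C) : R := let: Complex a b := z in Num.sqrt (a ^+ 2 + b ^+ 2).

(* A (discrete, possibly infinite) group given by its carrier (a choiceType,
   which is no restriction classically), multiplication, inverse and unit. *)
Variables (G : choiceType) (mul : G -> G -> G) (inv : G -> G) (e : G).

Definition is_group : Prop :=
  [/\ forall x y z, mul x (mul y z) = mul (mul x y) z,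
      forall x, mul e x = x, forall x, mul x e = x,
      forall x, mul (inv x) x = e & forall x, mul x (inv x) = e].

Definition amenable : Prop :=
  exists mu : set G -> R,
    [/\ forall A, 0 <= mu A, mu setT = 1,
        forall A B, A `&` B = set0 -> mu (A `|` B) = mu A + mu B
      & forall g A, mu ((mul g) @` A) = mu A].

Definition length_function (L : G -> R) : Prop :=
  [/\ forall g, 0 <= L g, L e = 0, forall g, L (inv g) = L g
    & forall g h, L (mul g h) <= L g + L h].

Definition supp (a : G -> C) : set G := [set x | a x != 0].
Definition finsupp (a : G -> C) : Prop := finite_set (supp a).

Definition lpnorm (p : R) (f : G -> C) : \bar R :=
  poweR (\esum_(x in [set: G]) ((cabs (f x)) `^ p)%:E) p^-1.

Definition in_lp (q : R) (f : G -> C) : Prop :=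
  (\esum_(x in [set: G]) ((cabs (f x)) `^ q)%:E < +oo)%E.

Definition lconv (a f : G -> C) : G -> C :=
  fun x => \sum_(y \in supp a) a y * f (mul (inv y) x).

Definition opnorm (p : R) (a : G -> C) : \bar R :=
  ereal_sup [set lpnorm p (lconv a f) | f in [set f | (lpnorm p f <= 1)%E]].

Definition RD (p : R) : Prop :=
  exists (L : G -> R) (P : {poly R}), length_function L /\
    forall (a : G -> C) (d : R), finsupp a -> 0 <= d ->
      supp a `<=` [set g | L g <= d] ->
      (opnorm p a <= (P.[d])%:E * lpnorm p a)%E.

Definition in_T1 (f : G -> C) : Prop :=
  exists f1 f2 : G -> G -> C,
    [/\ forall x y, f (mul (inv x) y) = f1 x y + f2 x y,
        exists M : R, forall x, (\esum_(y in [set: G]) (cabs (f1 x y))%:E <= M%:E)%E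
      & exists M : R, forall y, (\esum_(x in [set: G]) (cabs (f2 x y))%:E <= M%:E)%E].

Definition Lit : \bar R :=
  ereal_inf [set q%:E | q in [set q : R | 0 < q /\ forall f, in_T1 f -> in_lp q f]].

End Defs.

(* Main.v *)
Require Import Defs.
From HB Require Import structures.
From mathcomp Require Import all_boot all_order all_algebra.
From mathcomp Require Import all_classical all_reals all_analysis.
From mathcomp.real_closed Require Import complex.
From mathcomp Require Import ring lra finmap.
Set Implicit Arguments.
Unset Strict Implicit.
Unset Printing Implicit Defensive.
Import Order.TTheory GRing.Theory Num.Theory numFieldNormedType.Exports.
Local Open Scope classical_set_scope.
Local Open Scope ring_scope.
Section ExpPoly.
Variable R : realType.

Lemma bernoulli_nat (s : R) (k : nat) : 1 <= s -> 1 + k%:R * (s - 1) <= s ^+ k.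
Proof.
move=> s1; elim: k => [|k IH]; first by rewrite mul0r addr0 expr0.
rewrite exprS.
have h : 1 + k.+1%:R * (s - 1) <= s * (1 + k%:R * (s - 1)).
  rewrite -natr1 mulrDl mul1r.
  have : 0 <= (s - 1) * (k%:R * (s - 1)).
    by apply: mulr_ge0; [lra | apply: mulr_ge0; [exact: ler0n| lra]].
  lra.
apply: (le_trans h); apply: ler_wpM2l; lra.
Qed.

Lemma exp_beats_poly (r K J : R) (M : nat) : 1 < r -> 0 <= K -> 0 <= J ->
  exists k : nat, K * (1 + k%:R * J) ^+ M < r ^+ k.
Proof.
move=> r1 K0 J0.
set s := r `^ (M.+1%:R)^-1.
have s1 : 1 < s.
  rewrite /s; have : 1 `^ (M.+1%:R)^-1 < r `^ (M.+1%:R)^-1.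
    by apply: gt0_ltr_powR; rewrite ?invr_gt0 ?ltr0n ?nnegrE //; lra.
  by rewrite powR1.
have rk k : r ^+ k = (s ^+ k) ^+ M.+1.
  have sM : s ^+ M.+1 = r.
    rewrite /s -powR_mulrn ?powR_ge0 // -powRrM mulVf ?pnatr_eq0 //.
    rewrite powRr1 //; lra.
  by rewrite -exprM mulnC exprM sM.
set t := (s - 1) / (s - 1 + J).
have t0 : 0 < t by rewrite /t divr_gt0 //; lra.
have t1 : t <= 1 by rewrite /t ler_pdivrMr; lra.
have tJ : t * J <= s - 1.
  rewrite /t mulrAC ler_pdivrMr; last lra.
  have : 0 <= (s - 1) * (s - 1) by apply: mulr_ge0; lra.
  nra.
have tM0 : 0 < t ^+ M by exact: exprn_gt0.
pose B := K / (t ^+ M * (s - 1)).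
have [k kB] : exists k : nat, B < k%:R.
  by exists (Num.trunc B).+1; exact: truncnS_gt.
exists k; rewrite rk.
have A1 : t * (1 + k%:R * J) <= 1 + k%:R * (s - 1).
  have : 0 <= k%:R * (s - 1 - t * J) by apply: mulr_ge0; [exact: ler0n|lra].
  nra.
have bk := bernoulli_nat k (ltW s1).
have X0 : 0 <= 1 + k%:R * J by apply: addr_ge0 => //; apply: mulr_ge0.
have step1 : (t * (1 + k%:R * J)) ^+ M <= (s ^+ k) ^+ M.
  apply: lerXn2r; rewrite ?nnegrE; [by apply: mulr_ge0; lra| |].
    by apply: exprn_ge0; lra.
  exact: (le_trans A1 bk).
have kpos : K < (1 + k%:R * (s - 1)) * t ^+ M.
  move: kB; rewrite /B ltr_pdivrMr; last by apply: mulr_gt0 => //; lra.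
  have : 0 <= t ^+ M by exact: ltW.
  nra.
rewrite exprS exprMn in step1 *.
have P0 : 0 <= (1 + k%:R * J) ^+ M by exact: exprn_ge0.
have sk1 : 1 + k%:R * (s - 1) <= s ^+ k := bk.
have Y0 : 0 <= (s ^+ k) ^+ M by apply: exprn_ge0; apply: exprn_ge0; lra.
case: (eqVneq ((1 + k%:R * J) ^+ M) 0) => [->|Pn0].
  rewrite mulr0; apply: mulr_gt0; last by apply: exprn_gt0; apply: exprn_gt0; lra.
  by apply: exprn_gt0; lra.
have Pp : 0 < (1 + k%:R * J) ^+ M by rewrite lt0r Pn0 P0.
have h1 : K * (1 + k%:R * J) ^+ M < (1 + k%:R * (s - 1)) * t ^+ M * (1 + k%:R * J) ^+ M.
  by rewrite ltr_pM2r.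
apply: (lt_le_trans h1).
have ks0 : 0 <= k%:R * (s - 1) by apply: mulr_ge0; [exact: ler0n|lra].
rewrite -mulrA; apply: ler_pM; [lra| by apply: mulr_ge0 => //; exact: ltW | exact: sk1 | exact: step1].
Qed.

End ExpPoly.

Section ExpPoly2.
Variable R : realType.

Lemma exp_beats_powR (r K J D : R) : 1 < r -> 0 <= K -> 0 <= J -> 0 <= D ->
  exists k : nat, K * (1 + k%:R * J) `^ D < r ^+ k.
Proof.
move=> r1 K0 J0 D0.
have [k hk] := exp_beats_poly (Num.trunc D).+1 r1 K0 J0.
exists k; apply: le_lt_trans hk; apply: ler_wpM2l => //.
have X1 : 1 <= 1 + k%:R * J by rewrite lerDl; apply: mulr_ge0.
rewrite -powR_mulrn; last lra.
apply: ler_powR => //; exact/ltW/truncnS_gt.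
Qed.

Lemma poly_bound (P : {poly R}) : exists A : R, 0 <= A /\
  forall x : R, 0 <= x -> `|P.[x]| <= A * (1 + x) ^+ (size P).
Proof.
exists (\sum_(i < size P) `|P`_i|); split.
  by apply: sumr_ge0 => i _.
move=> x x0; rewrite horner_coef mulr_suml.
apply: (le_trans (ler_norm_sum _ _ _)); apply: ler_sum => i _.
rewrite normrM normrX (ger0_norm x0); apply: ler_wpM2l => //.
have x1 : 1 <= 1 + x by lra.
apply: (@le_trans _ _ ((1 + x) ^+ i)).
  by apply: lerXn2r; rewrite ?nnegrE //; lra.
by apply: ler_weXn2l => //; exact: ltnW.
Qed.

End ExpPoly2.
Section GroupFacts.
Variables (G : choiceType) (mul : G -> G -> G) (inv : G -> G) (e : G).
Hypothesis Hg : is_group mul inv e.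

Lemma gA x y z : mul x (mul y z) = mul (mul x y) z.
Proof. by case: Hg. Qed.
Lemma g1m x : mul e x = x.
Proof. by case: Hg. Qed.
Lemma gm1 x : mul x e = x.
Proof. by case: Hg. Qed.
Lemma gVm x : mul (inv x) x = e.
Proof. by case: Hg. Qed.
Lemma gmV x : mul x (inv x) = e.
Proof. by case: Hg. Qed.
Lemma gKV x y : mul (inv x) (mul x y) = y.
Proof. by rewrite gA gVm g1m. Qed.
Lemma gVK x y : mul x (mul (inv x) y) = y.
Proof. by rewrite gA gmV g1m. Qed.
Lemma gmK x y : mul (mul y x) (inv x) = y.
Proof. by rewrite -gA gmV gm1. Qed.
Lemma gmVK x y : mul (mul y (inv x)) x = y.
Proof. by rewrite -gA gVm gm1. Qed.
Lemma gmul_inj x : injective (mul x).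
Proof. by move=> y z h; rewrite -(gKV x y) h gKV. Qed.
Lemma ginvK x : inv (inv x) = x.
Proof. by rewrite -{2}(gKV (inv x) x) gVm gm1. Qed.
Lemma ginvM x y : inv (mul x y) = mul (inv y) (inv x).
Proof.
have h : mul (mul x y) (inv (mul x y)) = mul (mul x y) (mul (inv y) (inv x)).
  by rewrite gmV -gA (gA y) gmV g1m gmV.
exact: gmul_inj h.
Qed.
Lemma ginv_inj : injective inv.
Proof. by move=> x y h; rewrite -(ginvK x) h ginvK. Qed.
Lemma ginv1 : inv e = e.
Proof. by rewrite -{1}(gm1 (inv e)) gVm. Qed.

End GroupFacts.
Lemma sumr1_size (R : ringType) (T : Type) (s : seq T) : \sum_(x <- s) (1 : R) = (size s)%:R.
Proof. by rewrite big_const_seq count_predT -Monoid.iteropE /= . Qed.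

Section Basics.
Variable R : realType.

Lemma cabs_real (r : R) : cabs (r%:C)%C = `|r|.
Proof. by rewrite /cabs /= expr0n /= addr0 sqrtr_sqr. Qed.

Lemma esum_seq (G : choiceType) (t : seq G) (phi : G -> \bar R) : uniq t ->
  (forall x, (0 <= phi x)%E) -> (forall x, x \notin t -> phi x = 0%E) ->
  \esum_(x in [set: G]) phi x = (\sum_(x <- t) phi x)%E.
Proof.
move=> ut p0 pt.
rewrite (esumID [set` t]); last by move=> *; exact: p0.
rewrite [X in (_ + X)%E]esum1 ?adde0; last first.
  by move=> x [_ /= xt]; apply: pt; apply/negP.
by rewrite setTI esum_fset // -fsbig_seq.
Qed.

Lemma esum_geo : \esum_(k in [set: nat]) ((2 ^ k.+1)%:R^-1 : R)%:E = 1%E.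
Proof.
rewrite -nneseries_esumT; last by move=> n; rewrite lee_fin invr_ge0 ler0n.
have h := @cvg_geometric_eseries_half R 1 0.
rewrite expr0 divr1 in h.
have E : (fun k : nat => (1 / (2 ^ (k + 1))%:R : R)%:E) = (fun k => ((2 ^ k.+1)%:R^-1)%:E).
  by apply: funext => k; rewrite addn1 div1r.
rewrite E in h.
exact: (cvg_lim _ h).
Qed.

Lemma esum_ge_term (T : choiceType) (phi : T -> \bar R) (x : T) :
  (forall y, (0 <= phi y)%E) -> (phi x <= \esum_(y in [set: T]) phi y)%E.
Proof.
move=> p0; rewrite -(esum_set1 (a := phi) (p0 x)).
rewrite [X in (_ <= X)%E](esumID [set x]); last by move=> *; exact: p0.
rewrite setTI.
by rewrite leeDl // esum_ge0.
Qed.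

End Basics.
Section T.
Variable R : realType.
Lemma rcD (a b : R) : ((a + b)%:C = a%:C + b%:C)%C.
Proof. by rewrite rmorphD. Qed.
Lemma rc_sum (T : Type) (s : seq T) (F : T -> R) : ((\sum_(x <- s) F x)%:C = \sum_(x <- s) (F x)%:C)%C.
Proof. by rewrite rmorph_sum. Qed.
Lemma rcM (a b : R) : ((a * b)%:C = a%:C * b%:C)%C.
Proof. by rewrite rmorphM. Qed.
End T.

Lemma sub_sum (R : realType) (T : eqType) (s t : seq T) (F : T -> R) :
  uniq s -> uniq t -> {subset s <= t} ->
  \sum_(x <- s) F x = \sum_(x <- t) (if x \in s then F x else 0).
Proof.
move=> us ut st; rewrite -big_mkcond /= -[RHS]big_filter; apply: perm_big.
apply: uniq_perm => //; first exact: filter_uniq.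
move=> x; rewrite mem_filter; case xs: (x \in s) => //=.
by rewrite (st _ xs).
Qed.



Lemma ultra_cvg (R : realType) (U : set_system nat) (UU : UltraFilter U) (w : nat -> R) :
  (forall n, 0 <= w n <= 1) -> cvg (w x @[x --> U]).
Proof.
move=> w01.
have PU : ProperFilter U := @ultra_proper _ _ UU.
have Fw : (w x @[x --> U]) `[0, 1]%classic.
  rewrite /=. apply: filterS (filterT). move=> n _ /=. rewrite in_itv /=. exact: w01.
have [p [_ clp]] := @segment_compact R 0 1 (w x @[x --> U]) _ Fw.
apply/cvg_ex; exists p => N Np.
case: (in_ultra_setVsetC (w @^-1` N) UU) => // hc.
have : (w x @[x --> U]) (~` N) by [].
move/clp => /(_ _ Np) [z [zN zN']].
by [].
Qed.

Section Amen.
Variable R : realType.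
Variables (G : choiceType) (mul : G -> G -> G) (inv : G -> G) (e : G).
Hypothesis Hg : is_group mul inv e.
Variable L : G -> R.
Hypothesis HL : length_function mul inv e L.

Definition ball (d : R) : set G := [set x | L x <= d].

Lemma L_ge0 x : 0 <= L x. Proof. by case: HL. Qed.
Lemma L_e : L e = 0. Proof. by case: HL. Qed.
Lemma L_inv x : L (inv x) = L x. Proof. by case: HL. Qed.
Lemma L_mul x y : L (mul x y) <= L x + L y. Proof. by case: HL. Qed.

Hypothesis Hfin : forall n : nat, finite_set (ball n%:R).

Definition Bs (n : nat) : seq G := enum_fset (fset_set (ball n%:R)).

Lemma Bs_uniq n : uniq (Bs n).
Proof. exact: fset_uniq. Qed.

Lemma mem_Bs n x : (x \in Bs n) = (L x <= n%:R).
Proof. by rewrite /Bs in_fset_set //; apply/idP/idP => [/set_mem //|h]; exact: mem_set. Qed.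

Lemma Bs_pos n : (0 < size (Bs n))%N.
Proof.
have : e \in Bs n by rewrite mem_Bs L_e.
by case: (Bs n).
Qed.

Definition cnt n (A : set G) : R := \sum_(x <- Bs n) (if x \in A then 1 else 0).
Definition uu n A : R := cnt n A / (size (Bs n))%:R.

Lemma cnt_ge0 n A : 0 <= cnt n A.
Proof. by apply: sumr_ge0 => x _; case: ifP. Qed.

Lemma cnt_le n A : cnt n A <= (size (Bs n))%:R.
Proof.
rewrite /cnt -sumr1_size; apply: ler_sum => x _.
by case: ifP.
Qed.

Lemma uu_01 n A : 0 <= uu n A <= 1.
Proof.
have h := Bs_pos n.
rewrite /uu divr_ge0 ?cnt_ge0 //= ler_pdivrMr ?ltr0n // mul1r; exact: cnt_le.
Qed.

Lemma uu_setT n : uu n setT = 1.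
Proof.
rewrite /uu /cnt (eq_bigr (fun=> 1)); last by move=> x _; rewrite in_setT.
rewrite sumr1_size divff // pnatr_eq0 -lt0n; exact: Bs_pos.
Qed.

Lemma uu_add n A B : A `&` B = set0 -> uu n (A `|` B) = uu n A + uu n B.
Proof.
move=> AB; rewrite /uu -mulrDl; congr (_ / _).
rewrite /cnt -big_split /=; apply: eq_bigr => x _.
rewrite in_setU; case xA: (x \in A); case xB: (x \in B) => //=; rewrite ?addr0 ?add0r //.
have : (A `&` B) x by split; apply/set_mem; [rewrite xA|rewrite xB].
by rewrite AB.
Qed.

Lemma uu_transl g A n j : (0 < j)%N -> L g <= j%:R ->
  (j * size (Bs (n + j)) <= j.+1 * size (Bs n))%N ->
  `|uu n (mul g @` A) - uu n A| <= 2 / j%:R.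
Proof.
move=> j0 Lg hj.
set s := Bs n; set t := Bs (n + j); set m := map (mul (inv g)) s.
have us : uniq s := Bs_uniq n.
have ut : uniq t := Bs_uniq (n + j).
have um : uniq m by rewrite map_inj_uniq //; exact: (gmul_inj Hg).
have st : {subset s <= t}.
  move=> x; rewrite !mem_Bs natrD => h; apply: (le_trans h); rewrite lerDl; exact: ler0n.
have mt : {subset m <= t}.
  move=> y /mapP [x xs ->]; rewrite mem_Bs natrD; move: xs; rewrite mem_Bs => xs.
  apply: (le_trans (L_mul _ _)); rewrite L_inv addrC; exact: lerD.
pose chi y : R := if y \in A then 1 else 0.
have e1 : cnt n (mul g @` A) = \sum_(y <- m) chi y.
  rewrite /cnt big_map; apply: eq_bigr => x _; rewrite /chi.
  have -> : (x \in mul g @` A) = (mul (inv g) x \in A).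
    apply/idP/idP.
      by move/set_mem => [a aA <-]; rewrite (gKV Hg); exact: mem_set.
    by move/set_mem => h; apply: mem_set; exists (mul (inv g) x) => //; rewrite (gVK Hg).
  by [].
have e3 : cnt n A = \sum_(y <- s) chi y by [].
rewrite /uu e1 e3 (sub_sum chi um ut mt) (sub_sum chi us ut st) -mulrBl -sumrB.
have b0 : 0 < (size s)%:R :> R by rewrite ltr0n; exact: Bs_pos.
have jr0 : 0 < j%:R :> R by rewrite ltr0n.
set D := \sum_(y <- t) _.
have c2 : \sum_(y <- t) (2:R) = 2 * (size t)%:R.
  by rewrite -sumr1_size mulr_sumr; apply: eq_bigr => *; rewrite mulr1.
have hD : `|D| <= 2 * ((size t)%:R - (size s)%:R).
  apply: (le_trans (ler_norm_sum _ _ _)).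
  apply: (@le_trans _ _ (\sum_(y <- t) (2 - (if y \in m then 1 else 0) - (if y \in s then 1 else 0)))).
    apply: ler_sum => y _; rewrite /chi.
    case: (y \in m); case: (y \in s); case: (y \in A);
      rewrite ?subrr ?normr0 ?subr0 ?sub0r ?normrN ?normr1; lra.
  rewrite !sumrB c2 -(sub_sum (fun=> 1)) // -(sub_sum (fun=> 1)) // !sumr1_size size_map.
  lra.
have hT : j%:R * (size t)%:R <= j.+1%:R * (size s)%:R :> R by rewrite -!natrM ler_nat.
rewrite -natr1 in hT.
rewrite normrM normfV (gtr0_norm b0) ler_pdivrMr // mulrAC ler_pdivlMr //.
nra.
Qed.

Hypothesis Hgrow : forall j : nat, (0 < j)%N ->
  exists n, (j * size (Bs (n + j)) <= j.+1 * size (Bs n))%N.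

Theorem amen_of_growth : amenable R mul.
Proof.
have /choice [N HN] : forall j, exists n,
    (0 < j)%N -> (j * size (Bs (n + j)) <= j.+1 * size (Bs n))%N.
  move=> j; case: (posnP j) => [->|jp]; first by exists 0%N.
  by have [n hn] := Hgrow jp; exists n.
have [U [UU sub]] := @ultraFilterLemma nat \oo _.
have PU : ProperFilter U := @ultra_proper _ _ UU.
pose v A j := uu (N j) A.
have v01 A j : 0 <= v A j <= 1 by exact: uu_01.
have cv A : cvg (v A x @[x --> U]) := ultra_cvg UU (v01 A).
exists (fun A => lim (v A x @[x --> U])); split.
- move=> A; apply: limr_ge => //; apply: nearW => j; by case/andP: (v01 A j).
- have -> : v setT = fun=> 1 by apply: funext => j; rewrite /v uu_setT.
  exact: lim_cst.
- move=> A B AB.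
  have -> : v (A `|` B) = v A + v B by apply: funext => j; rewrite /v uu_add.
  by rewrite limD.
- move=> g A.
  pose w j := v (mul g @` A) j - v A j.
  have hw' : w x @[x --> \oo] --> 0.
    apply/cvgrPdist_le => eps eps0.
    exists ((Num.trunc (L g)).+1 + (Num.trunc (2 / eps)).+1)%N => // j /= hj.
    have j0 : (0 < j)%N by apply: leq_trans hj; rewrite addSn.
    have hLg : L g <= j%:R.
      apply: (le_trans (ltW (truncnS_gt (L g)))); rewrite ler_nat.
      by apply: leq_trans hj; exact: leq_addr.
    have h2 : 2 / eps < j%:R.
      apply: (lt_le_trans (truncnS_gt _)); rewrite ler_nat.
      by apply: leq_trans hj; exact: leq_addl.
    rewrite sub0r normrN /w /v.
    apply: (le_trans (uu_transl A j0 hLg (HN j j0))).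
    have jr0 : 0 < j%:R :> R by rewrite ltr0n.
    rewrite ler_pdivrMr //; rewrite ltr_pdivrMr // in h2; lra.
  have hw : w x @[x --> U] --> 0 by move=> M /hw' /sub.
  have -> : v (mul g @` A) = v A + w.
    by apply: funext => j; rewrite /w /= addrC subrK.
  rewrite limD //; last by apply/cvg_ex; exists 0.
  by rewrite (cvg_lim _ hw) ?addr0.
Qed.

End Amen.

Section PolyGrowth.
Variable R : realType.
Variables (G : choiceType) (mul : G -> G -> G) (inv : G -> G) (e : G).
Hypothesis Hg : is_group mul inv e.
Variable L : G -> R.
Hypothesis HL : length_function mul inv e L.
Variables K D : R.
Hypothesis K0 : 0 <= K.
Hypothesis D0 : 0 <= D.
Hypothesis Hpoly : forall d : R, 0 <= d -> forall s : seq G, uniq s -> s != [::] ->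
  (forall g, g \in s -> L g <= d) -> (forall g, g \in s -> inv g \in s) ->
  (size s)%:R <= K * (1 + d) `^ D.

Lemma poly_fin (n : nat) : finite_set (ball L n%:R).
Proof.
apply: contrapT => inf.
have [M hM] : exists M : nat, K * (1 + n%:R) `^ D < M%:R.
  by exists (Num.trunc (K * (1 + n%:R) `^ D)).+1; exact: truncnS_gt.
have [B BA hB] := infinite_set_fset M inf.
set b := enum_fset B.
set t := undup (b ++ map inv b).
have bt : {subset b <= t} by move=> x xb; rewrite mem_undup mem_cat xb.
have sz : (size b <= size t)%N by apply: uniq_leq_size => //; exact: fset_uniq.
have Mpos : (0 < M)%N.
  rewrite lt0n; apply/eqP => M0; move: hM; rewrite M0 => hM.
  have : 0 <= K * (1 + n%:R) `^ D by apply: mulr_ge0 => //; exact: powR_ge0.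
  lra.
have tn : t != [::].
  apply/eqP => t0; move: sz; rewrite t0 /= leqn0 => /eqP /size0nil b0.
  by move: hB; rewrite -/b b0 /= leqNgt Mpos.
have tL : forall g, g \in t -> L g <= n%:R.
  move=> g; rewrite mem_undup mem_cat => /orP [gb|/mapP [x xb ->]].
    exact: (BA g gb).
  rewrite (L_inv HL); exact: (BA x xb).
have tS : forall g, g \in t -> inv g \in t.
  move=> g; rewrite !mem_undup !mem_cat => /orP [gb|/mapP [x xb ->]].
    by rewrite map_f ?orbT.
  by rewrite (ginvK Hg) xb.
have := Hpoly (ler0n _ n) (undup_uniq _) tn tL tS.
move=> h; have : (M <= size t)%N by apply: leq_trans hB sz.
rewrite -(ler_nat R) => h2; lra.
Qed.

Lemma Bs_bound (n : nat) : (size (Bs L n))%:R <= K * (1 + n%:R) `^ D.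
Proof.
apply: Hpoly; first exact: ler0n.
- exact: Bs_uniq.
- have : e \in Bs L n by rewrite (mem_Bs poly_fin) (L_e HL).
  by case: (Bs L n).
- by move=> g; rewrite (mem_Bs poly_fin).
- by move=> g; rewrite !(mem_Bs poly_fin) (L_inv HL).
Qed.

Lemma poly_growth (j : nat) : (0 < j)%N ->
  exists n, (j * size (Bs L (n + j)) <= j.+1 * size (Bs L n))%N.
Proof.
move=> j0; case: (pselect (exists n, (j * size (Bs L (n + j)) <= j.+1 * size (Bs L n))%N)) => // H.
have H' : forall n, (j.+1 * size (Bs L n) < j * size (Bs L (n + j)))%N.
  move=> n; rewrite ltnNge; apply/negP => h; apply: H; by exists n.
have b0 : (0 < size (Bs L 0))%N by apply: (Bs_pos HL poly_fin).
have ind : forall k, (j.+1 ^ k <= j ^ k * size (Bs L (k * j)))%N.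
  elim=> [|k IH]; first by rewrite !expn0 mul1n.
  rewrite expnS (expnS j) [(k.+1 * j)%N]mulSnr.
  apply: (leq_trans (leq_mul (leqnn j.+1) IH)).
  have -> : (j * j ^ k * size (Bs L (k * j + j)) = j ^ k * (j * size (Bs L (k * j + j))))%N.
    by rewrite mulnCA mulnA.
  rewrite mulnCA leq_mul2l; apply/orP; right; exact: ltnW (H' _).
have r1 : 1 < j.+1%:R / j%:R :> R.
  by rewrite ltr_pdivlMr ?ltr0n // mul1r ltr_nat.
have [k hk] := exp_beats_powR r1 K0 (ler0n R j) D0.
have := Bs_bound (k * j); rewrite natrM.
have : (j.+1%:R / j%:R) ^+ k <= (size (Bs L (k * j)))%:R :> R.
  rewrite expr_div_n ler_pdivrMr ?exprn_gt0 ?ltr0n // mulrC -!natrX -natrM ler_nat.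
  exact: ind.
lra.
Qed.

Theorem amen_of_poly : amenable R mul.
Proof. exact: (amen_of_growth Hg HL poly_fin poly_growth). Qed.

End PolyGrowth.

Section EsumNat.
Variable R : realType.

Lemma esum_subset_le (T : choiceType) (A B : set T) (u : T -> \bar R) :
  A `<=` B -> (forall x, (0 <= u x)%E) ->
  (\esum_(x in A) u x <= \esum_(x in B) u x)%E.
Proof.
move=> AB u0; rewrite (esum_mkcond A) (esum_mkcond B); apply: le_esum => x _.
case: ifP => xA; last by case: ifP.
by rewrite ifT //; apply: mem_set; apply: AB; apply: set_mem.
Qed.

Lemma esumZ_nat (x : R) (u : nat -> \bar R) : 0 <= x -> (forall k, (0 <= u k)%E) ->
  \esum_(k in [set: nat]) (x%:E * u k)%E = (x%:E * \esum_(k in [set: nat]) u k)%E.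
Proof.
move=> x0 u0; rewrite -!nneseries_esumT //; last by move=> k; apply: mule_ge0.
by rewrite nneseriesZl.
Qed.

Lemma esum_shift (u : nat -> \bar R) : (forall k, (0 <= u k)%E) ->
  (\esum_(k in [set: nat]) u k.+1 <= \esum_(k in [set: nat]) u k)%E.
Proof.
move=> u0; rewrite -(esum_image setT succn u); last by move=> a b _ _ [].
exact: esum_subset_le.
Qed.

Lemma powR_le1_inv (x r : R) : 0 <= x -> 0 < r -> x `^ r <= 1 -> x <= 1.
Proof.
move=> x0 r0 h; rewrite leNgt; apply/negP => x1.
have := gt0_ltr_powR r0 (ler01 : 0 <= (1:R)) x0 x1; rewrite powR1 => h2.
lra.
Qed.

Lemma cabs_ge0 (z : R[i]) : 0 <= cabs z.
Proof. by case: z => a b; exact: sqrtr_ge0. Qed.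

Lemma le_sum_term (I : eqType) (t : seq I) (F : I -> R) (j : I) :
  uniq t -> j \in t -> (forall i, 0 <= F i) -> F j <= \sum_(i <- t) F i.
Proof.
move=> ut jt F0; rewrite (bigD1_seq j) //= lerDl; exact: sumr_ge0.
Qed.

End EsumNat.

Section Piece.
Variable R : realType.
Variables (G : choiceType) (mul : G -> G -> G) (inv : G -> G) (e : G).
Hypothesis Hg : is_group mul inv e.
Variable p : R.
Hypothesis p1 : 1 <= p.
Variables (L : G -> R) (P : {poly R}).
Hypothesis HRD : forall (a : G -> R[i]) (d : R), Defs.finsupp a -> 0 <= d ->
      supp a `<=` [set g | L g <= d] ->
      (opnorm mul inv p a <= (P.[d])%:E * lpnorm p a)%E.
Variables (s : seq G) (d : R).
Hypotheses (us : uniq s) (sn : s != [::]) (sL : forall g, g \in s -> L g <= d)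
  (sS : forall g, g \in s -> inv g \in s) (d0 : 0 <= d).

Let N : R := (size s)%:R.
Let c : R := ((`|P.[d]| + 1) * N `^ p^-1)^-1.

Let N0 : 0 < N.
Proof. by rewrite /N ltr0n lt0n size_eq0. Qed.

Let c0 : 0 < c.
Proof.
rewrite /c invr_gt0; apply: mulr_gt0; last exact: powR_gt0.
have := normr_ge0 P.[d]; lra.
Qed.

Let p0 : 0 < p. Proof. exact: (lt_le_trans ltr01 p1). Qed.

Let a : G -> R[i] := fun y => if y \in s then (c%:C)%C else 0.

Fixpoint rho (k : nat) (w : G) : R :=
  if k is k'.+1 then \sum_(g <- s) c * rho k' (mul (inv g) w)
  else (if w == e then 1 else 0).

Let supp_a : supp a = [set` s].
Proof.
apply/seteqP; split => y /=; rewrite /supp /a /=; case: ifP => // ys.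
  by rewrite eqxx.
by move=> _; rewrite fmorph_eq0 gt_eqF.
Qed.

Let lconv_rho k : lconv mul inv a (fun w => ((rho k w)%:C)%C) = (fun w => ((rho k.+1 w)%:C)%C).
Proof.
apply: funext => w; rewrite /lconv supp_a -fsbig_seq //= rmorph_sum.
by apply: eq_big_seq => g gs; rewrite /a gs rmorphM.
Qed.

Lemma rho_ge0 k w : 0 <= rho k w.
Proof.
elim: k w => [|k IH] w /=; first by case: ifP.
apply: sumr_ge0 => g _; apply: mulr_ge0; [exact: ltW | exact: IH].
Qed.

Let lpnorm_a : lpnorm p a = ((N `^ p^-1) * c)%:E.
Proof.
rewrite /lpnorm (esum_seq (t := s)) //; last 2 first.
- by move=> x; rewrite lee_fin powR_ge0.
- by move=> x xs; rewrite /a (negPf xs) /= expr0n /= addr0 sqrtr0 powR0 // gt_eqF.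
have -> : (\sum_(x <- s) ((cabs (a x)) `^ p)%:E)%E = ((size s)%:R * c `^ p)%:E.
  rewrite sumEFin; congr (_%:E).
  rewrite -[X in X * _]sumr1_size mulr_suml; apply: eq_big_seq => x xs.
  by rewrite /a xs cabs_real ger0_norm ?mul1r //; exact: ltW.
rewrite poweR_EFin powRM //; last exact: powR_ge0.
by rewrite -powRrM mulfV ?powRr1 ?gt_eqF //; exact: ltW.
Qed.

Let opnorm_le1 : (opnorm mul inv p a <= 1)%E.
Proof.
apply: (le_trans (HRD (d := d) _ d0 _)).
- by rewrite /Defs.finsupp supp_a; exact: finite_seq.
- by rewrite supp_a => g /= gs; exact: sL.
rewrite lpnorm_a -EFinM lee_fin.
have Np : 0 < N `^ p^-1 by exact: powR_gt0.
have -> : N `^ p^-1 * c = (`|P.[d]| + 1)^-1.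
  rewrite /c invfM mulrCA mulfV ?mulr1 //; lra.
have q0 : 0 < `|P.[d]| + 1 by have := normr_ge0 P.[d]; lra.
rewrite ler_pdivrMr // mul1r.
have := ler_norm P.[d]; lra.
Qed.

Lemma lp_rho k : (lpnorm p (fun w => ((rho k w)%:C)%C) <= 1)%E.
Proof.
elim: k => [|k IH].
  rewrite /lpnorm (esum_seq (t := [:: e])) //; last 2 first.
  - by move=> x; rewrite lee_fin powR_ge0.
  - move=> x; rewrite inE => /negPf xe /=; rewrite xe expr0n /= addr0 sqrtr0 powR0 //.
    by rewrite gt_eqF.
  by rewrite big_seq1 /= eqxx expr0n /= addr0 expr1n sqrtr1 powR1 /= powR1.
rewrite -lconv_rho; apply: le_trans opnorm_le1.
apply: ereal_sup_ubound; exists (fun w => ((rho k w)%:C)%C) => //.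
Qed.

Lemma lpnorm_le1_pt (f : G -> R[i]) w : (lpnorm p f <= 1)%E -> cabs (f w) <= 1.
Proof.
rewrite /lpnorm => h.
set S := \esum_(x in _) _ in h.
have S0 : (0 <= S)%E by apply: esum_ge0 => x _; rewrite lee_fin powR_ge0.
have S1 : (S <= 1)%E.
  move: h S0; case: S => [r| |] //.
    rewrite poweR_EFin !lee_fin => h r0; apply: (powR_le1_inv r0 _ h).
    by rewrite invr_gt0.
  by rewrite eqy_poweR // invr_gt0.
have : (((cabs (f w)) `^ p)%:E <= S)%E.
  by apply: esum_ge_term => x; rewrite lee_fin powR_ge0.
move=> h2; have := le_trans h2 S1; rewrite lee_fin => h3.
exact: (powR_le1_inv (cabs_ge0 _) p0 h3).
Qed.

Lemma rho_le1 k w : rho k w <= 1.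
Proof.
have := lpnorm_le1_pt w (lp_rho k); rewrite cabs_real.
have := ler_norm (rho k w); lra.
Qed.

Let wt (k : nat) : R := (2 ^ k.+1)%:R^-1.
Let wt0 k : 0 <= wt k. Proof. by rewrite /wt invr_ge0 ler0n. Qed.

Let H (w : G) : \bar R := \esum_(k in [set: nat]) (wt k * rho k w)%:E.

Let H_ge0 w : (0 <= H w)%E.
Proof. by apply: esum_ge0 => k _; rewrite lee_fin mulr_ge0 ?rho_ge0. Qed.

Let H_le1 w : (H w <= 1)%E.
Proof.
rewrite -esum_geo; apply: le_esum => k _; rewrite lee_fin.
have := rho_le1 k w; have := rho_ge0 k w; have := wt0 k; rewrite /wt; nra.
Qed.

Let H_fin w : H w \is a fin_num.
Proof. by rewrite ge0_fin_numE ?H_ge0 // (le_lt_trans (H_le1 w)) ?ltry. Qed.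

Let Hr (w : G) : R := fine (H w).
Let HrE w : (Hr w)%:E = H w. Proof. exact: fineK. Qed.

Let Hr_term k w : wt k * rho k w <= Hr w.
Proof.
rewrite -lee_fin HrE; apply: (esum_ge_term (phi := fun k => (wt k * rho k w)%:E)).
by move=> j; rewrite lee_fin mulr_ge0 ?rho_ge0.
Qed.

Let Hr_ge0 w : 0 <= Hr w.
Proof. by rewrite -lee_fin HrE. Qed.

Let Hr_e : 0 < Hr e.
Proof.
apply: lt_le_trans (Hr_term 0 e); rewrite /= eqxx mulr1 /wt invr_gt0 ltr0n.
by rewrite expn_gt0.
Qed.

Lemma Hr_schur w : \sum_(g <- s) Hr (mul (inv g) w) <= (2 / c) * Hr w.
Proof.
rewrite -lee_fin -sumEFin EFinM HrE.
under eq_bigr do rewrite HrE.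
rewrite /H -esum_sum; last by move=> k g _ _; rewrite lee_fin mulr_ge0 ?rho_ge0.
have E : forall k, (\sum_(g <- s) (wt k * rho k (mul (inv g) w))%:E)%E =
    ((2 / c)%:E * (wt k.+1 * rho k.+1 w)%:E)%E.
  move=> k; rewrite sumEFin -EFinM; congr (_%:E).
  rewrite -mulr_sumr /= -mulr_sumr.
  rewrite /wt !expnS !natrM !invfM.
  by field; rewrite pnatr_eq0 expn_eq0 /= gt_eqF.
rewrite (eq_esum (fun k _ => E k)).
rewrite esumZ_nat; last 2 first.
- by rewrite divr_ge0 // ltW.
- by move=> k; rewrite lee_fin mulr_ge0 ?rho_ge0.
rewrite lee_pmul2l //; last by rewrite lte_fin divr_gt0.
by apply: (esum_shift (u := fun k => (wt k * rho k w)%:E)) => k; rewrite lee_fin mulr_ge0 ?rho_ge0.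
Qed.

Let Hr_shift g w : g \in s -> 0 < Hr (mul (inv g) w) -> 0 < Hr w.
Proof.
move=> gs h.
have h1 : Hr (mul (inv g) w) <= (2 / c) * Hr w.
  apply: le_trans (Hr_schur w).
  exact: (le_sum_term (F := fun g => Hr (mul (inv g) w))).
have := Hr_ge0 w; rewrite le_eqVlt => /orP [/eqP H0|//].
by move: h1; rewrite -H0 mulr0 => h1; lra.
Qed.

Let rp (x : G) : G := xget e [set y | 0 < Hr (mul (inv x) y)].
Let hh (x : G) : R := Hr (mul (inv x) (rp x)).

Let hh_pos x : 0 < hh x.
Proof.
rewrite /hh /rp; apply: (xgetPex e (P := [set y | 0 < Hr (mul (inv x) y)])).
by exists x => /=; rewrite (gVm Hg).
Qed.

Let rp_shift x g : g \in s -> rp (mul x g) = rp x.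
Proof.
move=> gs; rewrite /rp; congr (xget e _).
apply/seteqP; split => y /=; rewrite (ginvM Hg) -(gA Hg).
  exact: Hr_shift.
move=> h; have gs' := sS gs.
apply: (Hr_shift gs'); rewrite (ginvK Hg) (gVK Hg); exact: h.
Qed.

Lemma piece_h : exists h : G -> R, (forall x, 0 < h x) /\
  forall x, \sum_(g <- s) h (mul x g) <= 2 * ((`|P.[d]| + 1) * (size s)%:R `^ p^-1) * h x.
Proof.
exists hh; split => // x.
have -> : 2 * ((`|P.[d]| + 1) * (size s)%:R `^ p^-1) = 2 / c by rewrite /c invrK.
rewrite (eq_big_seq (fun g => Hr (mul (inv g) (mul (inv x) (rp x))))); first exact: Hr_schur.
by move=> g gs; rewrite /hh rp_shift // (ginvM Hg) -(gA Hg).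
Qed.

End Piece.

Lemma esum_swap (R : realType) (T1 T2 : choiceType) (a : T1 -> T2 -> \bar R) :
  (forall i j, (0 <= a i j)%E) ->
  \esum_(i in [set: T1]) \esum_(j in [set: T2]) a i j =
  \esum_(j in [set: T2]) \esum_(i in [set: T1]) a i j.
Proof.
move=> a0; rewrite !esum_esum //.
rewrite (reindex_esum ([set: T2] `*`` (fun=> [set: T1])) _ (fun x => (x.2, x.1))) //.
split=> //=.
- by move=> [i1 i2] [j1 j2] /= _ _ [] -> ->.
- by move=> [i1 i2] [Pi1 Qi2] /=; exists (i2, i1).
Qed.

Section Hump.
Variable R : realType.
Variables (G : choiceType) (mul : G -> G -> G) (inv : G -> G) (e : G).
Hypothesis Hg : is_group mul inv e.
Variable q : R.
Hypothesis q0 : 0 < q.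
Variables (S : nat -> seq G) (h : nat -> G -> R) (C : nat -> R).
Hypothesis uS : forall n, uniq (S n).
Hypothesis symS : forall n g, g \in S n -> inv g \in S n.
Hypothesis hpos : forall n x, 0 < h n x.
Hypothesis hschur : forall n x, \sum_(g <- S n) h n (mul x g) <= C n * h n x.
Hypothesis C1 : forall n, 1 <= C n.

Let wt (k : nat) : R := (2 ^ k.+1)%:R^-1.
Let wt0 k : 0 < wt k. Proof. by rewrite /wt invr_gt0 ltr0n expn_gt0. Qed.
Definition cc n : R := wt n / C n.

Hypothesis big : forall n, n%:R <= (size (S n))%:R * (cc n) `^ q.

Let C0 n : 0 < C n. Proof. by apply: lt_le_trans (C1 n). Qed.
Let cc0 n : 0 < cc n. Proof. by rewrite /cc divr_gt0. Qed.
Let cc_le n : cc n <= wt n.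
Proof. by rewrite /cc ler_pdivrMr // ler_peMr // ltW. Qed.
Let ccC n : cc n * C n = wt n.
Proof. by rewrite /cc mulfVK // gt_eqF. Qed.

Lemma count_le n x : \sum_(g <- S n) (if h n x <= h n (mul x g) then 1 else 0) <= C n.
Proof.
have hx := hpos n x.
rewrite -(ler_pM2r hx) mulr_suml; apply: le_trans (hschur n x).
apply: ler_sum => g _; case: ifP => [hle|_]; first by rewrite mul1r.
by rewrite mul0r ltW.
Qed.

Definition ind (b : bool) : R := if b then 1 else 0.
Lemma ind_ge0 b : 0 <= ind b. Proof. by case: b. Qed.
Lemma ind_le1 b : ind b <= 1. Proof. by case: b. Qed.

Definition FF g : \bar R := \esum_(n in [set: nat]) (cc n * ind (g \in S n))%:E.
Definition FF1 x y : \bar R :=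
  \esum_(n in [set: nat]) (cc n * ind ((mul (inv x) y \in S n) && (h n x <= h n y)))%:E.
Definition FF2 x y : \bar R :=
  \esum_(n in [set: nat]) (cc n * ind ((mul (inv x) y \in S n) && (h n y < h n x)))%:E.

Let gen_le1 (b : nat -> bool) : (\esum_(n in [set: nat]) (cc n * ind (b n))%:E <= 1)%E.
Proof.
rewrite -esum_geo; apply: le_esum => n _; rewrite lee_fin.
have := ind_le1 (b n); have := ind_ge0 (b n); have := cc_le n; have := cc0 n.
rewrite /wt; nra.
Qed.

Let gen_ge0 (b : nat -> bool) : (0 <= \esum_(n in [set: nat]) (cc n * ind (b n))%:E)%E.
Proof. by apply: esum_ge0 => n _; rewrite lee_fin mulr_ge0 ?ind_ge0 // ltW. Qed.

Let gen_fin (b : nat -> bool) : \esum_(n in [set: nat]) (cc n * ind (b n))%:E \is a fin_num.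
Proof. by rewrite ge0_fin_numE ?gen_ge0 // (le_lt_trans (gen_le1 b)) ?ltry. Qed.

Let gen_fineK (b : nat -> bool) :
  ((fine (\esum_(n in [set: nat]) (cc n * ind (b n))%:E))%:E = \esum_(n in [set: nat]) (cc n * ind (b n))%:E)%E.
Proof. exact: fineK. Qed.

Let gen_fine_ge0 (b : nat -> bool) : 0 <= fine (\esum_(n in [set: nat]) (cc n * ind (b n))%:E).
Proof. by rewrite -lee_fin gen_fineK. Qed.

Definition ff g : R[i] := ((fine (FF g))%:C)%C.
Definition ff1 x y : R[i] := ((fine (FF1 x y))%:C)%C.
Definition ff2 x y : R[i] := ((fine (FF2 x y))%:C)%C.

Lemma ff_split x y : ff (mul (inv x) y) = ff1 x y + ff2 x y.
Proof.
rewrite /ff /ff1 /ff2 -rmorphD; congr (_%:C)%C.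
rewrite -fineD ?gen_fin //; congr fine.
rewrite /FF /FF1 /FF2 -esumD; last 2 first.
- by move=> n _; rewrite lee_fin mulr_ge0 ?ind_ge0 // ltW.
- by move=> n _; rewrite lee_fin mulr_ge0 ?ind_ge0 // ltW.
apply: eq_esum => n _; rewrite -EFinD -mulrDr ltNge.
by case: (mul (inv x) y \in S n); case: (h n x <= h n y); rewrite /ind /= ?addr0 ?add0r.
Qed.


Let ind_and_le (b c : bool) : ind (b && c) <= ind c.
Proof. by case: b; case: c; rewrite /ind. Qed.

Let term_ge0 n (b : bool) : (0 <= (cc n * ind b)%:E)%E.
Proof. by rewrite lee_fin mulr_ge0 ?ind_ge0 // ltW. Qed.

Lemma row_bound x : (\esum_(y in [set: G]) (cabs (ff1 x y))%:E <= 1%:E)%E.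
Proof.
have E1 : forall y, (cabs (ff1 x y))%:E = FF1 x y.
  move=> y; rewrite /ff1 cabs_real ger0_norm.
    exact: (gen_fineK (fun n => (mul (inv x) y \in S n) && (h n x <= h n y))).
  exact: (gen_fine_ge0 (fun n => (mul (inv x) y \in S n) && (h n x <= h n y))).
rewrite (eq_esum (fun y _ => E1 y)) /FF1 esum_swap; last by move=> *; exact: term_ge0.
rewrite -esum_geo; apply: le_esum => n _.
rewrite (esum_seq (t := map (mul x) (S n))).
- rewrite big_map sumEFin lee_fin -mulr_sumr -/(wt n) -ccC ler_wpM2l ?(ltW (cc0 n)) //.
  apply: le_trans _ (count_le n x); apply: ler_sum => g _.
  rewrite (gKV Hg); exact: ind_and_le.
- by rewrite map_inj_uniq //; exact: (gmul_inj Hg).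
- by move=> y; exact: term_ge0.
- move=> y yn; have -> : (mul (inv x) y \in S n) = false.
    apply/negP => h1; move/negP: yn; apply; apply/mapP; exists (mul (inv x) y) => //.
    by rewrite (gVK Hg).
  by rewrite /ind /= mulr0.
Qed.

Lemma col_bound y : (\esum_(x in [set: G]) (cabs (ff2 x y))%:E <= 1%:E)%E.
Proof.
have E1 : forall x, (cabs (ff2 x y))%:E = FF2 x y.
  move=> x; rewrite /ff2 cabs_real ger0_norm.
    exact: (gen_fineK (fun n => (mul (inv x) y \in S n) && (h n y < h n x))).
  exact: (gen_fine_ge0 (fun n => (mul (inv x) y \in S n) && (h n y < h n x))).
rewrite (eq_esum (fun x _ => E1 x)) /FF2 esum_swap; last by move=> *; exact: term_ge0.
rewrite -esum_geo; apply: le_esum => n _.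
rewrite (esum_seq (t := map (mul y) (S n))).
- rewrite big_map sumEFin lee_fin -mulr_sumr -/(wt n) -ccC ler_wpM2l ?(ltW (cc0 n)) //.
  apply: le_trans _ (count_le n y); apply: ler_sum => g _.
  apply: le_trans (ind_and_le _ _) _; rewrite /ind; case: ifP => [/ltW ->|] //.
  by case: ifP.
- by rewrite map_inj_uniq //; exact: (gmul_inj Hg).
- by move=> x; exact: term_ge0.
- move=> x xn; have -> : (mul (inv x) y \in S n) = false.
    apply/negP => h1; move/negP: xn; apply; apply/mapP; exists (mul (inv y) x).
      have := symS h1; rewrite (ginvM Hg) (ginvK Hg) //.
    by rewrite (gVK Hg).
  by rewrite /ind /= mulr0.
Qed.

Lemma ff_T1 : in_T1 mul inv ff.
Proof.
exists ff1, ff2; split.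
- exact: ff_split.
- by exists 1 => x; exact: row_bound.
- by exists 1 => y; exact: col_bound.
Qed.

Lemma ff_not_lp : ~ in_lp q ff.
Proof.
rewrite /in_lp => hlt.
set Sq := \esum_(x in _) _ in hlt.
have Sq0 : (0 <= Sq)%E by apply: esum_ge0 => x _; rewrite lee_fin powR_ge0.
have low : forall n, ((n%:R)%:E <= Sq)%E.
  move=> n; apply: le_trans (_ : (((size (S n))%:R * cc n `^ q)%:E <= Sq)%E).
    by rewrite lee_fin; exact: big.
  have eqS : (((size (S n))%:R * cc n `^ q)%:E =
      \sum_(g <- S n) ((if g \in S n then cc n `^ q else 0)%:E))%E.
    rewrite sumEFin; congr (_%:E); rewrite -sumr1_size mulr_suml.
    by apply: eq_big_seq => g gs; rewrite gs mul1r.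
  rewrite eqS -(esum_seq (t := S n) (phi := fun g => (if g \in S n then cc n `^ q else 0)%:E)) //.
  - apply: le_esum => g _; case: ifP => gs; last by rewrite lee_fin powR_ge0.
    have hF : cc n <= cabs (ff g).
      have t := esum_ge_term (phi := fun k => (cc k * ind (g \in S k))%:E) n (fun k => term_ge0 k _).
      have g0 := gen_fine_ge0 (fun n => g \in S n).
      rewrite /ff cabs_real ger0_norm //.
      rewrite -lee_fin (gen_fineK (fun n => g \in S n)).
      by apply: le_trans _ t; rewrite /ind gs mulr1.
    rewrite lee_fin; apply: ge0_ler_powR => //; first exact: ltW.
      by rewrite nnegrE; exact: ltW (cc0 n).
    by rewrite nnegrE; exact: cabs_ge0.
  - by move=> g; case: ifP => _; rewrite lee_fin ?powR_ge0.
  - by move=> g /negPf ->.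
move: hlt Sq0 low; case: Sq => [r| |] //= _ r0 low.
have := low (Num.trunc r).+1; rewrite lee_fin => h2.
have := truncnS_gt r; lra.
Qed.

End Hump.

Section Alg.
Variable R : realType.

Lemma powRV (b r : R) : 0 < b -> (b^-1) `^ r = (b `^ r)^-1.
Proof.
move=> b0; rewrite -powR_inv1 ?ltW // -powRrM mulN1r powRN //.
Qed.

Lemma alg_bound (w n0 q p N Q : R) : 0 < w -> 0 < q -> q < p -> 1 <= N -> 1 <= Q ->
  N * (w / (2 * (Q * N `^ p^-1))) `^ q < n0 ->
  N <= (n0 * (2 / w) `^ q) `^ (1 - q / p)^-1 * Q `^ (q / (1 - q / p)).
Proof.
move=> w0 q0 qp N1 Q1 h.
have p0 : 0 < p by lra.
set g := 1 - q / p.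
have g0 : 0 < g by rewrite /g subr_gt0 ltr_pdivrMr // mul1r.
have N0 : 0 < N by lra.
have Q0 : 0 < Q by lra.
have pN : 0 < N `^ p^-1 by exact: powR_gt0.
have E : (w / (2 * (Q * N `^ p^-1))) `^ q = (w / 2) `^ q * ((Q `^ q)^-1 * (N `^ (q / p))^-1).
  have -> : w / (2 * (Q * N `^ p^-1)) = (w / 2) * (Q^-1 * (N `^ p^-1)^-1).
    by rewrite !invfM; field; rewrite !gt_eqF.
  have a1 : 0 <= w / 2 by rewrite divr_ge0 // ltW.
  have a2 : 0 <= Q^-1 by rewrite invr_ge0 ltW.
  have a3 : 0 <= (N `^ p^-1)^-1 by rewrite invr_ge0 ltW.
  rewrite (powRM _ a1); last exact: mulr_ge0.
  by rewrite (powRM _ a2 a3) !powRV // -powRrM [p^-1 * q]mulrC.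
have E2 : N * (N `^ (q / p))^-1 = N `^ g.
  rewrite /g powRB; last by apply/implyP => _; rewrite gt_eqF.
  by rewrite powRr1 ?ltW.
rewrite E in h.
have wq : 0 < (w / 2) `^ q by rewrite powR_gt0 // divr_gt0.
have Qq : 0 < Q `^ q by exact: powR_gt0.
have h1 : (w / 2) `^ q * (Q `^ q)^-1 * N `^ g < n0.
  have eq : N * ((w / 2) `^ q * ((Q `^ q)^-1 / N `^ (q / p))) =
      (w / 2) `^ q * (Q `^ q)^-1 * (N / N `^ (q / p)) by ring.
  by rewrite -E2 -eq.
have h2 : N `^ g < n0 * (2 / w) `^ q * Q `^ q.
  have e1 : (2 / w) `^ q = ((w / 2) `^ q)^-1.
    by rewrite -powRV ?divr_gt0 // invf_div.
  have -> : N `^ g = ((w / 2) `^ q)^-1 * Q `^ q * ((w / 2) `^ q * (Q `^ q)^-1 * N `^ g).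
    by field; rewrite !gt_eqF.
  have -> : n0 * (2 / w) `^ q * Q `^ q = ((w / 2) `^ q)^-1 * Q `^ q * n0.
    by rewrite e1; ring.
  by rewrite ltr_pM2l // mulr_gt0 // invr_gt0.
have n00 : 0 < n0.
  apply: le_lt_trans h; apply: mulr_ge0; first exact: ltW.
  by apply: mulr_ge0; [exact: powR_ge0 | apply: mulr_ge0; rewrite invr_ge0 powR_ge0].
have -> : N = (N `^ g) `^ g^-1 by rewrite -powRrM mulfV ?gt_eqF // powRr1 // ltW.
apply: le_trans (ge0_ler_powR _ _ _ (ltW h2)) _.
- by rewrite invr_ge0 ltW.
- by rewrite nnegrE powR_ge0.
- rewrite nnegrE; apply: mulr_ge0; [apply: mulr_ge0; [exact: ltW| exact: powR_ge0] | exact: powR_ge0].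
rewrite powRM; last 2 first.
- by apply: mulr_ge0; [exact: ltW| exact: powR_ge0].
- exact: powR_ge0.
by rewrite -powRrM.
Qed.

End Alg.

Unset Implicit Arguments.

Theorem corollary8p2 (R : realType) (G : choiceType) (mul : G -> G -> G)
    (inv : G -> G) (e : G) (p : R) :
  is_group mul inv e -> ~ amenable R mul ->
  1 <= p <= 2 -> RD mul inv e p ->
  (p%:E <= Lit R mul inv)%E.
Proof.
move=> Hg Hna /andP [p1 _] [L [P [HL HRD]]].
rewrite /Lit; apply: le_ereal_inf_tmp => _ [q [q0 hq] <-].
rewrite lee_fin leNgt; apply/negP => qp.
have p0 : 0 < p by lra.
pose Cf (sd : seq G * R) : R := 2 * ((`|P.[sd.2]| + 1) * (size sd.1)%:R `^ p^-1).
pose wt (n : nat) : R := (2 ^ n.+1)%:R^-1.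
pose good n (sd : seq G * R) := [/\ uniq sd.1, sd.1 != [::], (forall g, g \in sd.1 -> L g <= sd.2),
   (forall g, g \in sd.1 -> inv g \in sd.1) & 0 <= sd.2] /\
   n%:R <= (size sd.1)%:R * (wt n / Cf sd) `^ q.
have Hgood : forall n, exists sd, good n sd.
  move=> n; apply: contrapT => H; apply: Hna.
  have [A [A0 hA]] := poly_bound P.
  set gm := 1 - q / p.
  have gm0 : 0 < gm by rewrite /gm subr_gt0 ltr_pdivrMr // mul1r.
  pose K := (n%:R * (2 / wt n) `^ q) `^ gm^-1 * (A + 1) `^ (q / gm).
  pose D := (size P)%:R * (q / gm).
  have qg : 0 <= q / gm by apply: divr_ge0; exact: ltW.
  apply: (amen_of_poly Hg HL (K := K) (D := D)).
  - by apply: mulr_ge0; exact: powR_ge0.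
  - by apply: mulr_ge0; [exact: ler0n | exact: qg].
  move=> d d0 s us sn sL sS.
  have hlt : (size s)%:R * (wt n / Cf (s, d)) `^ q < n%:R.
    rewrite ltNge; apply/negP => hle; apply: H; exists (s, d); split => //.
  have N1 : 1 <= (size s)%:R :> R by rewrite ler1n lt0n size_eq0.
  have Q1 : 1 <= `|P.[d]| + 1 by have := normr_ge0 P.[d]; lra.
  have wt0 : 0 < wt n by rewrite /wt invr_gt0 ltr0n expn_gt0.
  have hb := alg_bound wt0 q0 qp N1 Q1 hlt.
  apply: (le_trans hb).
  rewrite /K -mulrA; apply: ler_wpM2l; first exact: powR_ge0.
  have X1 : 1 <= (1 + d) ^+ size P by apply: exprn_ege1; lra.
  have hQ : `|P.[d]| + 1 <= (A + 1) * (1 + d) ^+ size P.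
    have := hA d d0; nra.
  apply: (le_trans (ge0_ler_powR qg _ _ hQ)).
  - by rewrite nnegrE; lra.
  - by rewrite nnegrE; apply: mulr_ge0; lra.
  rewrite powRM; [|lra|lra].
  by rewrite /D -powR_mulrn; [rewrite -powRrM | lra].
have /choice [SD HSD] := Hgood.
pose S n := (SD n).1.
pose C n := Cf (SD n).
have /choice [hh Hh] : forall n, exists h : G -> R, (forall x, 0 < h x) /\
    forall x, \sum_(g <- S n) h (mul x g) <= C n * h x.
  move=> n; have [[us sn sL sS d0] _] := HSD n.
  exact: (piece_h Hg p1 HRD us sn sL sS d0).
have C1 : forall n, 1 <= C n.
  move=> n; have [[us sn sL sS d0] _] := HSD n.
  rewrite /C /Cf.
  have N1 : 1 <= (size (SD n).1)%:R :> R by rewrite ler1n lt0n size_eq0.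
  have Np : 1 <= (size (SD n).1)%:R `^ p^-1.
    rewrite -[X in X <= _](powRr0 (size (SD n).1)%:R); apply: ler_powR => //.
    by rewrite invr_ge0 ltW.
  have := normr_ge0 P.[(SD n).2]; nra.
have uS : forall n, uniq (S n) by move=> n; case: (HSD n) => [[]].
have symS : forall n g, g \in S n -> inv g \in S n by move=> n; case: (HSD n) => [[]].
have big : forall n, n%:R <= (size (S n))%:R * cc C n `^ q by move=> n; case: (HSD n).
have T1 := ff_T1 Hg uS symS (fun n => (Hh n).1) (fun n => (Hh n).2) C1.
exact: (ff_not_lp q0 uS C1 big (hq _ T1)).
Qed.
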